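(* Consider the CETC closed loop (continuous-time event-triggering rule with parameters $\theta,\eta,\theta_m,\kappa_0,\kappa_1,\kappa_2>0$ and $m^0<0$), and let $F=\sup_k t_k$. Then the dynamic variable satisfies $m(t)<0$ for all $t\in[0,F)$.
   Context: Standing setting. Fix $\ell>0$, $\lambda_1,\lambda_2>0$, $c_1,c_2\in C^0([0,\ell];\mathbb R)$ and constants $q\ne0$, $\rho\ne0$ with $|\rho q|\le \tfrac12$. For $f_1,\dots,f_n\in L^2(0,\ell)$ write $\|(f_1,\dots,f_n)^T\|=(\sum_i\|f_i\|^2_{L^2(0,\ell)})^{1/2}$. Let $\mathcal T=\{(x,\xi):0\le\xi\le x\le\ell\}$. Plant: $\partial_t u=-\lambda_1\partial_x u+c_1(x)v$, $\partial_t v=\lambda_2\partial_x v+c_2(x)u$, $u(0,t)=qv(0,t)$, $v(\ell,t)=\rho u(\ell,t)+\mathcal U(t)$, where $\mathcal U$ is the applied boundary input; measured output $v(0,t)$. Kernels (each system below has a unique continuous solution on $\mathcal T$): (P) $\lambda_1(\partial_x+\partial_\xi)P^{\alpha\alpha}=c_1(x)P^{\beta\alpha}$, $\lambda_1\partial_xP^{\alpha\beta}-\lambda_2\partial_\xi P^{\alpha\beta}=c_1(x)P^{\beta\beta}$, $\lambda_2\partial_xP^{\beta\alpha}-\lambda_1\partial_\xi P^{\beta\alpha}=-c_2(x)P^{\alpha\alpha}$, $\lambda_2(\partial_x+\partial_\xi)P^{\beta\beta}=-c_2(x)P^{\alpha\beta}$, with $P^{\alpha\alpha}(\ell,\xi)=\rho^{-1}P^{\beta\alpha}(\ell,\xi)$,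 $P^{\alpha\beta}(x,x)=-\frac{c_1(x)}{\lambda_1+\lambda_2}$, $P^{\beta\beta}(\ell,\xi)=\rho P^{\alpha\beta}(\ell,\xi)$, $P^{\beta\alpha}(x,x)=\frac{c_2(x)}{\lambda_1+\lambda_2}$. (R) $\lambda_1(\partial_x+\partial_\xi)R^{uu}=-c_2(\xi)R^{uv}$, $\lambda_1\partial_xR^{uv}-\lambda_2\partial_\xi R^{uv}=-c_1(\xi)R^{uu}$, $\lambda_2\partial_xR^{vu}-\lambda_1\partial_\xi R^{vu}=c_2(\xi)R^{vv}$, $\lambda_2(\partial_x+\partial_\xi)R^{vv}=c_1(\xi)R^{vu}$, with $R^{uu}(\ell,\xi)=\rho^{-1}R^{vu}(\ell,\xi)$, $R^{uv}(x,x)=-\frac{c_1(x)}{\lambda_1+\lambda_2}$, $R^{vv}(\ell,\xi)=\rho R^{uv}(\ell,\xi)$, $R^{vu}(x,x)=\frac{c_2(x)}{\lambda_1+\lambda_2}$. (K) $\lambda_1(\partial_x+\partial_\xi)K^{uu}=-c_2(\xi)K^{uv}$, $\lambda_1\partial_xK^{uv}-\lambda_2\partial_\xi K^{uv}=-c_1(\xi)K^{uu}$, $\lambda_2\partial_xK^{vu}-\lambda_1\partial_\xi K^{vu}=c_2(\xi)K^{vv}$, $\lambda_2(\partial_x+\partial_\xi)K^{vv}=c_1(\xi)K^{vu}$, with $K^{uu}(x,0)=\frac{\lambda_2}{q\lambda_1}K^{uv}(x,0)$, $K^{uv}(x,x)=\frac{c_1(x)}{\lambda_1+\lambda_2}$,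 $K^{vv}(x,0)=\frac{q\lambda_1}{\lambda_2}K^{vu}(x,0)$, $K^{vu}(x,x)=-\frac{c_2(x)}{\lambda_1+\lambda_2}$. Observer: with gains $p_1(x)=-\lambda_2P^{\alpha\beta}(x,0)$, $p_2(x)=-\lambda_2P^{\beta\beta}(x,0)$ and $\tilde v(0,t)=v(0,t)-\hat v(0,t)$: $\partial_t\hat u=-\lambda_1\partial_x\hat u+c_1(x)\hat v+p_1(x)\tilde v(0,t)$, $\partial_t\hat v=\lambda_2\partial_x\hat v+c_2(x)\hat u+p_2(x)\tilde v(0,t)$, $\hat u(0,t)=qv(0,t)$, $\hat v(\ell,t)=\rho\hat u(\ell,t)+\mathcal U(t)$. Transformed variables: $\tilde u=u-\hat u$, $\tilde v=v-\hat v$; $\tilde\beta(x,t)=\tilde v+\int_0^xR^{vu}(x,\xi)\tilde u(\xi,t)d\xi+\int_0^xR^{vv}(x,\xi)\tilde v(\xi,t)d\xi$ (so $\tilde\beta(0,t)=\tilde v(0,t)$); $\hat\alpha(x,t)=\hat u-\int_0^xK^{uu}(x,\xi)\hat u(\xi,t)d\xi-\int_0^xK^{uv}(x,\xi)\hat v(\xi,t)d\xi$, $\hat\beta(x,t)=\hat v-\int_0^xK^{vu}(x,\xi)\hat u(\xi,t)d\xi-\int_0^xK^{vv}(x,\xi)\hat v(\xi,t)d\xi$. Nominal feedback: $U(t)=\int_0^\ell N^u(\xi)\hat u(\xi,t)d\xi+\int_0^\ell N^v(\xi)\hat v(\xi,t)d\xi$ with $N^u(\xi)=K^{vu}(\ell,\xi)-\rho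 K^{uu}(\ell,\xi)$, $N^v(\xi)=K^{vv}(\ell,\xi)-\rho K^{uv}(\ell,\xi)$. Sampled-data input: given event times $0=t_0<t_1<\cdots$, the applied input is $\mathcal U(t)=U(t_k)$ for $t\in[t_k,t_{k+1})$ in both plant and observer; the input holding error is $d(t)=U(t_k)-U(t)$ for $t\in[t_k,t_{k+1})$. Dynamic variable: given $\eta,\theta_m,\kappa_0,\kappa_1,\kappa_2>0$ and $m^0<0$, $m$ is the continuous function with $m(0)=m^0$ that on each $(t_k,t_{k+1})$ solves $\dot m=-\eta m+\theta_m d^2-\kappa_0\|(\hat\alpha(\cdot,t),\hat\beta(\cdot,t))^T\|^2-\kappa_1\hat\alpha^2(\ell,t)-\kappa_2\tilde\beta^2(0,t)$. CETC rule: for $\theta>0$ let $\Gamma^c(t)=\theta d^2(t)+m(t)$; the event times are $t_0=0$ and $t_{k+1}=\inf\{t>t_k:\Gamma^c(t)>0\}$. *)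

(* Defs.v *)
From HB Require Import structures.
From mathcomp Require Import all_boot all_order all_algebra.
From mathcomp Require Import all_classical all_reals all_analysis.
Set Implicit Arguments. Unset Strict Implicit. Unset Printing Implicit Defensive.
Import Order.TTheory GRing.Theory Num.Theory.
Import numFieldNormedType.Exports.
Local Open Scope classical_set_scope.
Local Open Scope ring_scope.

Section CETC.
Variable R : realType.

Definition Lint (f : R -> R) (a b : R) : R :=
  Rintegral (@lebesgue_measure R) `[a, b] f.

Definition L2sq (ell : R) (f : R -> R) : R := Lint (fun x => f x ^+ 2) 0 ell.

(* Space-time fields are written f x t. *)

Definition tbeta (Rvu Rvv : R -> R -> R) (u v uh vh : R -> R -> R) (x t : R) : R :=
  (v x t - vh x t)
  + Lint (fun xi => Rvu x xi * (u xi t - uh xi t)) 0 x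
  + Lint (fun xi => Rvv x xi * (v xi t - vh xi t)) 0 x.

Definition halpha (Kuu Kuv : R -> R -> R) (uh vh : R -> R -> R) (x t : R) : R :=
  uh x t - Lint (fun xi => Kuu x xi * uh xi t) 0 x
         - Lint (fun xi => Kuv x xi * vh xi t) 0 x.

Definition hbeta (Kvu Kvv : R -> R -> R) (uh vh : R -> R -> R) (x t : R) : R :=
  vh x t - Lint (fun xi => Kvu x xi * uh xi t) 0 x
         - Lint (fun xi => Kvv x xi * vh xi t) 0 x.

Definition hnorm2 (ell : R) (Kuu Kuv Kvu Kvv : R -> R -> R) (uh vh : R -> R -> R) (t : R) : R :=
  L2sq ell (fun x => halpha Kuu Kuv uh vh x t) + L2sq ell (fun x => hbeta Kvu Kvv uh vh x t).

Definition Ufb (ell rho : R) (Kuu Kuv Kvu Kvv : R -> R -> R) (uh vh : R -> R -> R) (t : R) : R :=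
  Lint (fun xi => (Kvu ell xi - rho * Kuu ell xi) * uh xi t) 0 ell
  + Lint (fun xi => (Kvv ell xi - rho * Kuv ell xi) * vh xi t) 0 ell.

End CETC.

(* Main.v *)
Require Import Defs.
Set Warnings "-notation-overridden,-ambiguous-paths,-notation-incompatible-prefix".
From HB Require Import structures.
From mathcomp Require Import all_boot all_order all_algebra.
From mathcomp Require Import all_classical all_reals all_analysis.
From mathcomp Require Import lra.
Import Order.TTheory GRing.Theory Num.Theory.
Import numFieldNormedType.Exports.
Local Open Scope classical_set_scope.
Local Open Scope ring_scope.

Lemma dexp (R : realType) (c x : R) :
  is_derive x 1 (fun y => expR (c * y)) (c * expR (c * x)).
Proof.
have h1 : is_derive x 1 (fun y : R => c * y) c.
  have h := @is_deriveZ R R R id c x 1 1 (is_derive_id _ _).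
  by rewrite /GRing.scale /= mulr1 in h.
have := @is_derive1_comp R expR (fun y => c * y) x _ _ (is_derive_expR _) h1.
by rewrite mulrC.
Qed.

Lemma cetc_core (R : realType) (f df : R -> R) (c a b : R) : a < b -> f a < 0 ->
  f @ a^'+ --> f a -> (forall x, a < x -> is_derive x 1 f (df x)) ->
  (forall x, a < x < b -> df x <= - c * f x) -> f b < 0.
Proof.
move=> ab fa fr fd dfb.
set g := fun x => f x * expR (c * x).
have gd x : a < x -> is_derive x 1 g ((df x + c * f x) * expR (c * x)).
  move=> ax.
  have := @is_deriveM R R f (fun y => expR (c * y)) x 1 _ _ (fd x ax) (@dexp R c x).
  suff -> : (f x *: (c * expR (c * x)) + expR (c * x) *: df x) = (df x + c * f x) * expR (c * x) by [].
  rewrite /GRing.scale /=; lra.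
have gc : {within `[a, b], continuous g}.
  apply/continuous_within_itvP => //; split.
  - move=> x; rewrite in_itv /= => /andP[ax _].
    have [dg _] := gd x ax.
    exact/differentiable_continuous/derivable1_diffP.
  - apply: cvgM => //; apply: cvg_at_right_filter.
    apply: continuous_comp; first exact: mulrl_continuous.
    exact: continuous_expR.
  - apply: cvg_at_left_filter.
    have [dg _] := gd b ab.
    exact/differentiable_continuous/derivable1_diffP.
have [xi] := MVT ab (fun x (xin : x \in `]a, b[) => gd x (proj1 (andP (xin : _ < _ < _)))) gc.
rewrite in_itv /= => /andP[axi xib] eq.
have e0 := expR_gt0 (c * xi).
have ea := expR_gt0 (c * a).
have eb := expR_gt0 (c * b).
have h1 : (df xi + c * f xi) * expR (c * xi) <= 0.
  have := dfb xi (introT andP (conj axi xib)); nra.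
have h2 : g b <= g a by rewrite -subr_le0 eq; nra.
move: h2; rewrite /g; nra.
Qed.

Theorem lemma2 (R : realType)
  (ell lam1 lam2 : R) (c1 c2 : R -> R) (q rho : R)
  (Kuu Kuv Kvu Kvv Rvu Rvv : R -> R -> R)
  (theta eta thetam kap0 kap1 kap2 m0 : R)
  (u v uh vh : nat -> R -> R -> R)
  (t : nat -> \bar R) (mk : nat -> R -> R) (m : R -> R) :
  0 < ell -> 0 < lam1 -> 0 < lam2 ->
  {within `[0, ell], continuous c1} -> {within `[0, ell], continuous c2} ->
  q != 0 -> rho != 0 -> `|rho * q| <= 2^-1 ->
  0 < theta -> 0 < eta -> 0 < thetam -> 0 < kap0 -> 0 < kap1 -> 0 < kap2 -> m0 < 0 ->
  (* event times: t_0 = 0, increasing, and the CETC rule, where on [t_k, oo) the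
     closed loop with the input held at U(t_k) is the k-th continuation
     (u k, v k, uh k, vh k, mk k) *)
  t 0%N = 0%:E ->
  (forall k, t k = +oo%E -> t k.+1 = +oo%E) ->
  (forall k (tk : R), t k = tk%:E ->
     (tk%:E < t k.+1)%E /\
     t k.+1 = ereal_inf [set s%:E | s in [set s : R | tk < s /\
        0 < theta * (Ufb ell rho Kuu Kuv Kvu Kvv (uh k) (vh k) tk
                     - Ufb ell rho Kuu Kuv Kvu Kvv (uh k) (vh k) s) ^+ 2 + mk k s]]) ->
  (* dynamic variable along the k-th continuation *)
  (forall k (tk : R), t k = tk%:E ->
     (mk k @ at_right tk --> mk k tk) /\
     (forall s, tk < s ->
        is_derive s 1 (mk k)
          (- eta * mk k s
           + thetam * (Ufb ell rho Kuu Kuv Kvu Kvv (uh k) (vh k) tk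
                       - Ufb ell rho Kuu Kuv Kvu Kvv (uh k) (vh k) s) ^+ 2
           - kap0 * hnorm2 ell Kuu Kuv Kvu Kvv (uh k) (vh k) s
           - kap1 * (halpha Kuu Kuv (uh k) (vh k) ell s) ^+ 2
           - kap2 * (tbeta Rvu Rvv (u k) (v k) (uh k) (vh k) 0 s) ^+ 2))) ->
  (* m(0) = m^0, continuity of m at event times, m = mk k on [t_k, t_{k+1}) *)
  mk 0%N 0 = m0 ->
  (forall k (tk1 : R), t k.+1 = tk1%:E -> mk k.+1 tk1 = mk k tk1) ->
  (forall k (tk s : R), t k = tk%:E -> tk <= s -> (s%:E < t k.+1)%E -> m s = mk k s) ->
  forall s : R, 0 <= s -> (s%:E < ereal_sup (range t))%E -> m s < 0.

Proof.
move=> ell0 lam10 lam20 _ _ _ _ _ th0 eta0 thm0 k00 k10 k20 m00 t0 too trule tder mk0 mkjump mdef.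
set r := thetam / theta.
have r0 : 0 < r by rewrite /r divr_gt0.
have thr : thetam = r * theta by rewrite /r divfK // gt_eqF.
have dich : forall k, t k = +oo%E \/ exists tk : R, t k = tk%:E.
  elim=> [|k [IH|[tk IH]]]; first by right; exists 0.
  - by left; exact: too.
  - have [lt _] := trule k tk IH.
    case E: (t k.+1) => [x| |]; [by right; exists x|by left|].
    by rewrite E in lt.
have Q : forall k (tk s : R), t k = tk%:E -> mk k tk < 0 -> tk < s -> (s%:E <= t k.+1)%E -> mk k s < 0.
  move=> k tk s tkE mneg tks sle.
  have [fr fd] := tder k tk tkE.
  have [_ tinf] := trule k tk tkE.
  apply: (@cetc_core R _ _ (eta + r)) tks mneg fr fd _.
  move=> x /andP[tkx xs].
  have nin : ~ (tk < x /\ 0 < theta * (Ufb ell rho Kuu Kuv Kvu Kvv (uh k) (vh k) tk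
                     - Ufb ell rho Kuu Kuv Kvu Kvv (uh k) (vh k) x) ^+ 2 + mk k x).
    move=> hx.
    have h : (t k.+1 <= x%:E)%E by rewrite tinf; apply: ereal_inf_lbound; exists x.
    by have := le_trans sle h; rewrite lee_fin leNgt xs.
  have hle : theta * (Ufb ell rho Kuu Kuv Kvu Kvv (uh k) (vh k) tk
                     - Ufb ell rho Kuu Kuv Kvu Kvv (uh k) (vh k) x) ^+ 2 + mk k x <= 0.
    by rewrite leNgt; apply/negP => h; apply: nin; split.
  have H0 : 0 <= hnorm2 ell Kuu Kuv Kvu Kvv (uh k) (vh k) x.
    by apply: addr_ge0; apply: Rintegral_ge0 => y _; exact: sqr_ge0.
  move: hle H0.
  set D := (_ - _) ^+ 2.
  set H := hnorm2 _ _ _ _ _ _ _ _.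
  set A := (halpha _ _ _ _ _ _) ^+ 2.
  set B := (tbeta _ _ _ _ _ _ _ _) ^+ 2.
  have DA : 0 <= A := sqr_ge0 _.
  have DB : 0 <= B := sqr_ge0 _.
  have DD : 0 <= D := sqr_ge0 _.
  rewrite thr => hle H0.
  have : r * (theta * D + mk k x) <= 0 by nra.
  nra.
have P : forall k (tk : R), t k = tk%:E -> mk k tk < 0.
  elim=> [|k IH] tk tkE.
    by move: tkE; rewrite t0 => -[<-]; rewrite mk0.
  have [tkoo|[tk' tk'E]] := dich k.
    by move: tkE; rewrite too.
  rewrite (mkjump k tk tkE).
  have [lt _] := trule k tk' tk'E.
  apply: (Q k tk' tk tk'E (IH tk' tk'E)); last by rewrite tkE.
  by move: lt; rewrite tkE lte_fin.
move=> s s0 ssup.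
have [_ [n _ <-] sn] := ereal_sup_gt ssup.
elim: n sn => [|n IH] sn.
  by move: sn; rewrite t0 lte_fin ltNge s0.
have [sn'|tns] := ltP s%:E (t n); first exact: IH.
have [tnoo|[tn tnE]] := dich n.
  by move: tns; rewrite tnoo leNgt ltey.
move: tns; rewrite tnE lee_fin le_eqVlt => /predU1P[e|tns].
  rewrite -e in sn *; by rewrite (mdef n tn tn tnE (lexx _) sn); exact: P.
rewrite (mdef n tn s tnE (ltW tns) sn).
by apply: (Q n tn s tnE (P n tn tnE) tns); exact: ltW.
Qed.
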